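(* Let $\lambda,\mu\in P^+$ and let $X\subseteq\mathcal{B}(\lambda)$, $Y\subseteq\mathcal{B}(\mu)$ be extremal subsets. Then $X\otimes Y$ is an extremal subset of $\mathcal{B}(\lambda)\otimes\mathcal{B}(\mu)$ if and only if there is no $i\in I$ and no $x\otimes y\in X\otimes Y$ which is a broken $i$-hinge, i.e. such that $\varepsilon_i(x)>0$, $\varphi_i(x)=0$, $\varepsilon_i(y)=0$, $\varphi_i(y)>0$, and $f_i(y)\notin Y$.
   Context: $\mathfrak g$ is a complex semisimple Lie algebra with Dynkin index set $I$ and dominant weights $P^+$. For $\lambda\in P^+$, $\mathcal{B}(\lambda)$ is Kashiwara's crystal of the irreducible module of highest weight $\lambda$, with operators $e_i,f_i:\mathcal{B}(\lambda)\to\mathcal{B}(\lambda)\sqcup\{0\}$, $\varepsilon_i(b)=\max\{k:e_i^k(b)\ne0\}$, $\varphi_i(b)=\max\{k:f_i^k(b)\ne0\}$. The tensor product crystal $\mathcal{B}(\lambda)\otimes\mathcal{B}(\mu)$ has $e_i(b_1\otimes b_2)=e_i(b_1)\otimes b_2$ if $\varepsilon_i(b_2)\le\varphi_i(b_1)$, else $b_1\otimes e_i(b_2)$; $f_i(b_1\otimes b_2)=f_i(b_1)\otimes b_2$ if $\varepsilon_i(b_2)<\varphi_i(b_1)$, else $b_1\otimes f_i(b_2)$. An $i$-string is a connected component of the graph with edges $b\to f_i(b)$. A subset $X$ of a crystal $\mathcal{B}$ is extremal if $X$ is nonempty and for every $i\in I$ and every $i$-string $S$ of $\mathcal{B}$,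 $S\cap X$ is $\varnothing$, $S$, or $\{b\}$ with $b\in S$, $e_i(b)=0$. *)

(* Defs.v *)
From mathcomp Require Import all_boot.
Set Implicit Arguments. Unset Strict Implicit. Unset Printing Implicit Defensive.

(* Abstract (Kashiwara-style) crystals over a finite Dynkin index set I,
   given by their Kashiwara operators e_i, f_i : B -> B ⊔ {0}
   (0 is encoded by None). *)
Record crystal (I : finType) := Crystal {
  cB :> finType;
  ce : I -> cB -> option cB;
  cf : I -> cB -> option cB }.

Definition iter_opt (T : Type) (g : T -> option T) (n : nat) (b : T) : option T :=
  iter n (obind g) (Some b).

Definition crystal_axioms (I : finType) (C : crystal I) : Prop :=
  [/\ forall i (b b' : C), cf i b = Some b' <-> ce i b' = Some b,
      forall i (b : C), exists n, iter_opt (ce i) n b = None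
    & forall i (b : C), exists n, iter_opt (cf i) n b = None].

(* eps_i(b) = max{k : e_i^k b <> 0},  phi_i(b) = max{k : f_i^k b <> 0};
   under crystal_axioms these maxima are < #|B|. *)
Definition eps (I : finType) (C : crystal I) (i : I) (b : C) : nat :=
  \max_(k < #|C|.+1 | iter_opt (ce i) k b != None) k.
Definition phi (I : finType) (C : crystal I) (i : I) (b : C) : nat :=
  \max_(k < #|C|.+1 | iter_opt (cf i) k b != None) k.

Definition tensor_e (I : finType) (C1 C2 : crystal I) (i : I)
  (p : (C1 * C2)%type) : option (C1 * C2)%type :=
  let: (b1, b2) := p in
  if eps i b2 <= phi i b1
  then omap (fun x => (x, b2)) (ce i b1)
  else omap (fun y => (b1, y)) (ce i b2).

Definition tensor_f (I : finType) (C1 C2 : crystal I) (i : I)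
  (p : (C1 * C2)%type) : option (C1 * C2)%type :=
  let: (b1, b2) := p in
  if eps i b2 < phi i b1
  then omap (fun x => (x, b2)) (cf i b1)
  else omap (fun y => (b1, y)) (cf i b2).

Definition tensor (I : finType) (C1 C2 : crystal I) : crystal I :=
  @Crystal I (C1 * C2)%type (tensor_e (C1:=C1) (C2:=C2)) (tensor_f (C1:=C1) (C2:=C2)).

Definition istring_rel (I : finType) (C : crystal I) (i : I) : rel C :=
  fun x y => (cf i x == Some y) || (cf i y == Some x).

Definition istring (I : finType) (C : crystal I) (i : I) (b0 : C) : {set C} :=
  [set b | connect (@istring_rel I C i) b0 b].

Definition extremal (I : finType) (C : crystal I) (X : {set C}) : Prop :=
  X != set0 /\
  forall (i : I) (b0 : C),
    let S := istring i b0 in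
    [\/ S :&: X = set0, S \subset X
      | exists2 b, S :&: X = [set b] & ce i b = None].

Definition broken_hinge (I : finType) (C1 C2 : crystal I) (Y : {set C2})
  (i : I) (x : C1) (y : C2) : Prop :=
  [/\ 0 < eps i x, phi i x = 0, eps i y = 0, 0 < phi i y
    & ~~ oapp (fun y' => y' \in Y) false (cf i y)].

(* Main.v *)
Require Import Defs.
From mathcomp Require Import all_boot zify.
From Stdlib Require Import Classical.
Set Implicit Arguments. Unset Strict Implicit. Unset Printing Implicit Defensive.

Section Gen.
Variable T : finType.
Implicit Types g : T -> option T.

Lemma iter_opt_None g n : iter n (obind g) None = None.
Proof. by elim: n => //= n ->. Qed.

Lemma iter_optD g p q b : iter_opt g (p + q) b = obind (iter_opt g p) (iter_opt g q b).
Proof.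
rewrite /iter_opt iterD; case: (iter q (obind g) (Some b)) => //=.
by rewrite iter_opt_None.
Qed.

Lemma iter_optS g n b : iter_opt g n.+1 b = obind g (iter_opt g n b).
Proof. by []. Qed.

Lemma iter_optSr g n b : iter_opt g n.+1 b = obind (iter_opt g n) (g b).
Proof. by rewrite -addn1 iter_optD. Qed.

Lemma iter_opt_down g k j b : j <= k -> iter_opt g k b != None -> iter_opt g j b != None.
Proof. by move=> jk; rewrite -(subnK jk) iter_optD; case: (iter_opt g j b). Qed.

Lemma periodic g b j1 j2 : j1 < j2 -> iter_opt g j1 b = iter_opt g j2 b ->
  iter_opt g j2 b != None -> forall n, iter_opt g n b != None.
Proof.
move=> lt E H n; elim: n.+1 {-2}n (ltnSn n) => [|N IH] m Hm //.
case: (ltnP m j2) => Hm2; first exact: iter_opt_down (ltnW Hm2) H.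
rewrite -(subnK Hm2) iter_optD -E -iter_optD; apply: IH; lia.
Qed.

Lemma iter_opt_bound g (nil : forall c, exists n, iter_opt g n c = None) b k :
  iter_opt g k b != None -> k < #|T|.
Proof.
move=> Hk; rewrite ltnNge; apply/negP => Hle.
pose h (j : 'I_k.+1) := odflt b (iter_opt g j b).
have ninj : ~ injective h by move/leq_card; rewrite card_ord; lia.
have [j1 [j2 [Heq Hne]]] : exists j1 j2, h j1 = h j2 /\ j1 <> j2.
  apply: NNPP => H; apply: ninj => j1 j2 E; apply: NNPP => N; apply: H; by exists j1, j2.
have Hs (j : 'I_k.+1) : iter_opt g j b != None.
  by apply: iter_opt_down Hk; rewrite -ltnS.
have Heq' : iter_opt g j1 b = iter_opt g j2 b.
  move: Heq (Hs j1) (Hs j2); rewrite /h.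
  by case: (iter_opt g j1 b) => // ?; case: (iter_opt g j2 b) => // ? /= ->.
have [c Hc] := nil b.
case: (ltngtP j1 j2) => Hlt.
- by move: (periodic Hlt Heq' (Hs j2) c); rewrite Hc.
- by move: (periodic Hlt (esym Heq') (Hs j1) c); rewrite Hc.
- by apply: Hne; apply: val_inj.
Qed.

Definition M g b := \max_(k < #|T|.+1 | iter_opt g k b != None) k.

Lemma M1 g b : iter_opt g (M g b) b != None.
Proof.
rewrite /M; apply: (big_ind (fun v => iter_opt g v b != None)) => //.
by move=> u v Hu Hv; rewrite /maxn; case: ifP.
Qed.

Lemma M2 g b k : k < #|T|.+1 -> iter_opt g k b != None -> k <= M g b.
Proof. by move=> Hk H; apply: (leq_bigmax_cond (Ordinal Hk)). Qed.

Lemma Mchar g (nil : forall c, exists n, iter_opt g n c = None) b k :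
  (k <= M g b) = (iter_opt g k b != None).
Proof.
apply/idP/idP => H; first exact: iter_opt_down H (M1 g b).
by apply: M2 => //; apply: leq_trans (iter_opt_bound nil H) _.
Qed.

Lemma M_step g (nil : forall c, exists n, iter_opt g n c = None) b b' :
  g b = Some b' -> M g b = (M g b').+1.
Proof.
move=> Hb.
have E k : iter_opt g k.+1 b = iter_opt g k b' by rewrite iter_optSr Hb.
apply/eqP; rewrite eqn_leq; apply/andP; split.
- case Em: (M g b) => [|m] //. rewrite ltnS Mchar // -E -Mchar // Em //.
- by rewrite Mchar // E M1.
Qed.

Lemma M_0 g b : g b = None -> M g b = 0.
Proof. by move=> Hb; have := M1 g b; case: (M g b) => // n; rewrite iter_optSr Hb. Qed.

End Gen.
Section Cry.
Variables (I : finType) (C : crystal I).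

Lemma eps0 i (b : C) : ce i b = None -> eps i b = 0.
Proof. exact: M_0. Qed.
Lemma phi0 i (b : C) : cf i b = None -> phi i b = 0.
Proof. exact: M_0. Qed.

Lemma step (HC : crystal_axioms C) i (b b' : C) : cf i b = Some b' ->
  phi i b = (phi i b').+1 /\ eps i b' = (eps i b).+1.
Proof.
case: HC => inv ne nf Hf; split; first exact: (M_step (nf i) Hf).
by apply: (M_step (ne i)); apply/inv.
Qed.

Lemma ext_L (inv : forall i (b b' : C), cf i b = Some b' -> ce i b' = Some b)
  (Z : {set C}) (HZ : extremal Z) i (b b' : C) : cf i b = Some b' ->
  (b' \in Z -> b \in Z) /\ (b \in Z -> b' \notin Z -> ce i b = None).
Proof.
move=> Hf; case: HZ => _ /(_ i b) /=.
have bS : b \in istring i b by rewrite inE connect0.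
have b'S : b' \in istring i b by rewrite inE connect1 // /istring_rel Hf eqxx.
case=> [H0 | Hsub | [c Hc Hce]].
- split=> H.
  + by move/setP: H0 => /(_ b'); rewrite in_setI b'S H in_set0.
  + by move/setP: H0 => /(_ b); rewrite in_setI bS H in_set0.
- by split=> _; [rewrite (subsetP Hsub _ bS) | rewrite (subsetP Hsub _ b'S)].
- split=> H.
  + move/setP: Hc => /(_ b'); rewrite in_setI b'S H in_set1 => /esym/eqP Eb.
    by move: Hce; rewrite -Eb (inv _ _ _ Hf).
  + move/setP: Hc => /(_ b); rewrite in_setI bS H in_set1 => /esym/eqP -> _ //.
Qed.

Lemma gen i (Z : {set C})
  (inv : forall (b b' : C), cf i b = Some b' -> ce i b' = Some b)
  (top : forall b : C, exists t k, ce i t = None /\ iter_opt (cf i) k t = Some b)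
  (L1 : forall b b' : C, cf i b = Some b' -> b' \in Z -> b \in Z)
  (L2 : forall b b' : C, cf i b = Some b' -> b \in Z -> b' \notin Z -> ce i b = None)
  (b0 : C) : let S := istring i b0 in
    [\/ S :&: Z = set0, S \subset Z | exists2 b, S :&: Z = [set b] & ce i b = None].
Proof.
move=> S.
have [t [k0 [Ht Hk0]]] := top b0.
pose Q c := exists k, iter_opt (cf i) k t = Some c.
have Qcl c d : istring_rel i c d -> Q c -> Q d.
  case/orP => /eqP E [k Hk].
  - by exists k.+1; rewrite iter_optS Hk.
  - case: k Hk => [|k] Hk.
      by case: Hk => Ec; move: (inv _ _ E); rewrite -Ec Ht.
    move: Hk; rewrite iter_optS; case Ek: (iter_opt (cf i) k t) => [m|] //= Hm.
    exists k; rewrite Ek; by move: (inv _ _ E) (inv _ _ Hm) => -> [->].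
have QS c : c \in S -> Q c.
  have Qp p a : path (@istring_rel I C i) a p -> Q a -> Q (last a p).
    elim: p a => //= a' p IH a /andP [Hr Hp] Qa; exact: IH Hp (Qcl _ _ Hr Qa).
  rewrite inE => /connectP [p Hp ->]; apply: Qp Hp _; by exists k0.
have tZ c k : iter_opt (cf i) k t = Some c -> c \in Z -> t \in Z.
  elim: k c => [|k IH] c; first by case=> ->.
  rewrite iter_optS; case Ek: (iter_opt (cf i) k t) => [m|] //= Hm cZ.
  exact: IH Ek (L1 _ _ Hm cZ).
have Ft l d : iter_opt (cf i) l.+1 t = Some d -> d \notin Z -> t \in Z ->
    exists2 t1, cf i t = Some t1 & t1 \notin Z.
  elim: l d => [|l IH] d; first by rewrite iter_optS /= => Hd dZ _; exists d => //.
  rewrite iter_optS; case Ek: (iter_opt (cf i) l.+1 t) => [m|] //= Hm dZ tZ'.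
  case: (boolP (m \in Z)) => mZ; last exact: IH Ek mZ tZ'.
  move: (L2 _ _ Hm mZ dZ); move: Ek; rewrite iter_optS.
  by case: (iter_opt (cf i) l t) => [m'|] //= /(inv _ _) -> //.
have Fz k c t1 : iter_opt (cf i) k.+1 t = Some c -> c \in Z -> cf i t = Some t1 -> t1 \in Z.
  elim: k c => [|k IH] c; first by rewrite iter_optS /= => -> ? [<-].
  rewrite iter_optS; case Ek: (iter_opt (cf i) k.+1 t) => [m|] //= Hm cZ.
  exact: IH Ek (L1 _ _ Hm cZ).
case: (boolP (S \subset Z)) => Hsub; first by apply: Or32.
case: (set_0Vmem (S :&: Z)) => [H0|[c]]; first by apply: Or31.
rewrite in_setI => /andP [cS cZ].
have [d /andP [dS dZ]] : exists d, (d \in S) && (d \notin Z).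
  by move/subsetPn: Hsub => [d ? ?]; exists d; apply/andP.
have [kc Hkc] := QS c cS; have [ld Hld] := QS d dS.
have tZ' := tZ _ _ Hkc cZ.
case: ld Hld => [|l] Hld; first by case: Hld => E; rewrite -E tZ' in dZ.
have [t1 Ht1 t1Z] := Ft _ _ Hld dZ tZ'.
have Eq c' : c' \in S -> c' \in Z -> c' = t.
  move=> c'S c'Z; have [k Hk] := QS c' c'S.
  case: k Hk => [|k] Hk; first by case: Hk.
  by rewrite (Fz _ _ _ Hk c'Z Ht1) in t1Z.
apply: Or33; exists t => //.
apply/setP => z; rewrite in_setI in_set1.
apply/andP/eqP => [[zS zZ]|->]; first exact: Eq.
by rewrite -(Eq c cS cZ).
Qed.
End Cry.
Section Tens.
Variables (I : finType) (C1 C2 : crystal I).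
Hypotheses (HC1 : crystal_axioms C1) (HC2 : crystal_axioms C2).
Local Notation T := (tensor C1 C2).

Lemma inv1 i (b b' : C1) : cf i b = Some b' <-> ce i b' = Some b.
Proof. by case: HC1. Qed.
Lemma inv2 i (b b' : C2) : cf i b = Some b' <-> ce i b' = Some b.
Proof. by case: HC2. Qed.

Lemma tensor_inv i (p p' : C1 * C2) :
  @cf _ T i p = Some p' <-> @ce _ T i p' = Some p.
Proof.
move: p p' => [x y] [x' y']; rewrite /= /tensor_f /tensor_e; split.
- case: (ltnP (eps i y) (phi i x)) => H.
  + case Ef: (cf i x) => [x''|] //= [<- <-].
    have [Hp _] := step HC1 Ef.
    have -> : eps i y <= phi i x'' by move: H; rewrite Hp ltnS.
    by move/inv1: Ef => ->.
  + case Ef: (cf i y) => [y''|] //= [<- <-].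
    have [_ He] := step HC2 Ef.
    have -> : (eps i y'' <= phi i x) = false by apply/negbTE; rewrite -ltnNge He ltnS.
    by move/inv2: Ef => ->.
- case: (leqP (eps i y') (phi i x')) => H.
  + case Ee: (ce i x') => [x''|] //= [<- <-].
    move/inv1: Ee => Ef; have [Hp _] := step HC1 Ef.
    have -> : eps i y' < phi i x'' by rewrite Hp ltnS.
    by rewrite Ef.
  + case Ee: (ce i y') => [y''|] //= [<- <-].
    move/inv2: Ee => Ef; have [_ He] := step HC2 Ef.
    have -> : (eps i y'' < phi i x') = false by apply/negbTE; rewrite -leqNgt -ltnS -He.
    by rewrite Ef.
Qed.

Lemma tensor_top i (p : C1 * C2) :
  exists t k, @ce _ T i t = None /\ iter_opt (@cf _ T i) k t = Some p.
Proof.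
suff H : forall n (p : C1 * C2), eps i p.1 + eps i p.2 < n ->
   exists t k, @ce _ T i t = None /\ iter_opt (@cf _ T i) k t = Some p.
  exact: (H _ p (ltnSn _)).
elim=> // n IH [x y] /= Hn.
case E: (@ce _ T i (x, y)) => [[x' y']|]; last by exists (x, y), 0.
have Hf : @cf _ T i (x', y') = Some (x, y) by apply/tensor_inv.
have Hm : eps i x' + eps i y' < n.
  move: E; rewrite /= /tensor_e; case: ifP => _.
  + case Ee: (ce i x) => [z|] //= [<- <-]; move/inv1: Ee => Ef.
    have [_ He] := step HC1 Ef; move: Hn; rewrite He; lia.
  + case Ee: (ce i y) => [z|] //= [<- <-]; move/inv2: Ee => Ef.
    have [_ He] := step HC2 Ef; move: Hn; rewrite He; lia.
have [t [k [Ht Hk]]] := IH (x', y') Hm.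
by exists t, k.+1; split => //; rewrite iter_optS Hk.
Qed.

End Tens.

Theorem theorem7p3 (I : finType) (C1 C2 : crystal I)
  (HC1 : crystal_axioms C1) (HC2 : crystal_axioms C2)
  (X : {set C1}) (Y : {set C2}) :
  extremal X -> extremal Y ->
  (extremal (C := tensor C1 C2) (setX X Y) <->
   ~ exists (i : I) (x : C1) (y : C2),
       [/\ x \in X, y \in Y & broken_hinge Y i x y]).
Proof.
move=> HX HY; split.
- move=> [_ Hext] [i [x [y [xX yY [ex px ey py nf]]]]].
  case Ex: (ce i x) => [x'|]; last by rewrite eps0 in ex.
  case Ey: (cf i y) => [y'|]; last by rewrite phi0 in py.
  rewrite Ey /= in nf.
  have He : @ce _ (tensor C1 C2) i (x, y) = Some (x', y) by rewrite /= /tensor_e ey px Ex.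
  have Hf : @cf _ (tensor C1 C2) i (x, y) = Some (x, y') by rewrite /= /tensor_f ey px ltnn Ey.
  have pS : (x, y) \in istring (C := tensor C1 C2) i (x, y) by rewrite inE connect0.
  have p'S : (x, y') \in istring (C := tensor C1 C2) i (x, y).
    by rewrite inE connect1 // /istring_rel Hf eqxx.
  case: (Hext i (x, y)) => [H0 | Hsub | [c Hc Hce]].
  + by move/setP: H0 => /(_ (x, y)); rewrite in_setI pS in_setX xX yY in_set0.
  + by move: (subsetP Hsub _ p'S); rewrite in_setX (negbTE nf) andbF.
  + move/setP: Hc => /(_ (x, y)); rewrite in_setI pS in_setX xX yY in_set1 => /esym/eqP Ec.
    by rewrite -Ec He in Hce.
- move=> Hno; split.
  + case: HX => /set0Pn [x xX] _; case: HY => /set0Pn [y yY] _.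
    by apply/set0Pn; exists (x, y); rewrite in_setX xX yY.
  + have invX : forall i (b b' : C1), cf i b = Some b' -> ce i b' = Some b.
      by move=> i b b' /(inv1 HC1); apply.
    have invY : forall i (b b' : C2), cf i b = Some b' -> ce i b' = Some b.
      by move=> i b b' /(inv2 HC2); apply.
    move=> i b0; apply: gen.
    * by move=> p p' /(tensor_inv HC1 HC2); apply.
    * by move=> p; exact: (tensor_top HC1 HC2 i p).
    * move=> [x y] [x' y']; rewrite /= /tensor_f; case: (ltnP (eps i y) (phi i x)) => H.
      - case Ef: (cf i x) => [z|] //= [<- <-]; rewrite !in_setX => /andP [h1 h2].
        by rewrite h2 ((ext_L invX HX Ef).1 h1).
      - case Ef: (cf i y) => [z|] //= [<- <-]; rewrite !in_setX => /andP [h1 h2].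
        by rewrite h1 ((ext_L invY HY Ef).1 h2).
    * move=> [x y] [x' y']; rewrite /= /tensor_f /tensor_e; case: (ltnP (eps i y) (phi i x)) => H.
      - case Ef: (cf i x) => [z|] //= [<- <-]; rewrite !in_setX => /andP [h1 h2].
        rewrite h2 andbT => h3; rewrite (ltnW H).
        by rewrite ((ext_L invX HX Ef).2 h1 h3).
      - case Ef: (cf i y) => [z|] //= [<- <-]; rewrite !in_setX => /andP [h1 h2].
        rewrite h1 /= => h3.
        have Ey := (ext_L invY HY Ef).2 h2 h3.
        have ey := eps0 Ey; rewrite ey in H; move: H; rewrite leqn0 => /eqP px.
        rewrite ey px leqnn.
        case Ex: (ce i x) => [x''|] //=; exfalso; apply: Hno.
        exists i, x, y; split => //; split => //.
        + by move/(inv1 HC1): Ex => Ef'; have [_ ->] := step HC1 Ef'.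
        + by have [-> _] := step HC2 Ef.
        + by rewrite Ef.
Qed.
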